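(* Let $X$ and $Y$ be Banach spaces and let $F:X\to Y$ be continuous and Gâteaux-differentiable, with $F(0)=0$. Let $R>0$ and $m>0$, and assume that for every $x\in X$ with $\|x\|\le R$ the derivative $DF(x)$ has a right-inverse $L(x)$ (a bounded linear map $Y\to X$ with $DF(x)L(x)v=v$ for all $v\in Y$) satisfying $\|L(x)\|\le m$. Then for every $\bar y\in Y$ with $\|\bar y\|<R/m$ and every $\mu>m$ there is some $\bar x\in X$ such that $\|\bar x\|<R$, $\|\bar x\|\le\mu\|\bar y\|$, and $F(\bar x)=\bar y$.
   Context: $F$ is Gâteaux-differentiable at $x$ if there is a continuous linear map $DF(x):X\to Y$ such that for every $u\in X$, $\lim_{t\to0}\|(F(x+tu)-F(x))/t-DF(x)u\|=0$. *)

(* Defs.v *)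
From HB Require Import structures.
From mathcomp Require Import all_boot all_order all_algebra.
From mathcomp Require Import all_classical all_reals all_analysis.
Set Implicit Arguments. Unset Strict Implicit. Unset Printing Implicit Defensive.
Import Order.TTheory GRing.Theory Num.Theory.
Import numFieldNormedType.Exports.
Local Open Scope classical_set_scope.
Local Open Scope ring_scope.

Definition is_gateaux_derivative (R : realType) (X Y : normedModType R)
  (F : X -> Y) (x : X) (D : {linear X -> Y}) : Prop :=
  continuous D /\
  forall u : X,
    (fun t : R => t^-1 *: (F (x + t *: u) - F x)) @ 0^' --> D u.

(* Main.v *)
Require Import Defs.
From HB Require Import structures.
From mathcomp Require Import all_boot all_order all_algebra.
From mathcomp Require Import all_classical all_reals all_analysis.
From mathcomp Require Import lra.
Import Order.TTheory GRing.Theory Num.Theory.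
Import numFieldNormedType.Exports.
Local Open Scope classical_set_scope.
Local Open Scope ring_scope.

Lemma zh (V : zmodType) (a b c y : V) : c - y = (a - y) - b + ((c - a) + b).
Proof. by rewrite [c - a + b]addrC addrA subrK addrC addrA subrK. Qed.

Lemma harm_small (R : realType) (c : R) : 0 < c ->
  \forall n \near \oo, harmonic n < c.
Proof.
move=> c0; have := (@cvg_harmonic R); move/cvgrPdist_lt => /(_ c c0).
apply: filterS => n; rewrite sub0r normrN ger0_norm //; exact: harmonic_ge0.
Qed.

Lemma harm_ex (R : realType) (c : R) : 0 < c ->
  exists N, forall n, (N <= n)%N -> harmonic n < c.
Proof. by move/harm_small => [N _ hN]; exists N => n /hN. Qed.

Lemma ekeland (R : realType) (X : completeNormedModType R) (f : X -> R)
  (fc : continuous f) (f0 : forall x, 0 <= f x) (e : R) (e0 : 0 < e) (x0 : X) :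
  exists xb, f xb + e * `|xb - x0| <= f x0 /\
    forall x, f xb <= f x + e * `|x - xb|.
Proof.
pose S z := [set y | f y + e * `|y - z| <= f z].
have Sz z : S z z by rewrite /S /= subrr normr0 mulr0 addr0.
have Strans z y w : S z y -> S y w -> S z w.
  rewrite /S /= => h1 h2.
  have hn : `|w - z| <= `|w - y| + `|y - z|.
    by rewrite (le_trans _ (ler_normD _ _)) // addrA subrK.
  have := ler_wpM2l (ltW e0) hn; rewrite mulrDr => h3. lra.
have hinf z : has_inf (f @` S z).
  split; first by exists (f z); exists z.
  by exists 0 => _ [y _ <-].
have infle z y : S z y -> inf (f @` S z) <= f y.
  move=> Sy; apply: (ge_inf (hinf z).2); by exists y.
have hex : forall p : X * nat, exists y, S p.1 y /\
    f y < inf (f @` S p.1) + harmonic p.2.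
  move=> [z n] /=; have [_ [y Sy <-] lt] := inf_adherent (harmonic_gt0 n) (hinf z).
  by exists y.
have [g hg] := choice hex.
pose x := fix loop n := if n is k.+1 then g (loop k, k) else x0.
have xS n : S (x n) (x n.+1) by have [] := hg (x n, n).
have xlt n : f (x n.+1) < inf (f @` S (x n)) + harmonic n by have [] := hg (x n, n).
have xmono n k : (n <= k)%N -> S (x n) (x k).
  elim: k => [|k IH]; first by rewrite leqn0 => /eqP->.
  rewrite leq_eqVlt => /orP[/eqP->|hlt]; first exact: Sz.
  exact: Strans (IH hlt) (xS k).
have key n y : S (x n.+1) y -> e * `|y - x n.+1| < harmonic n.
  move=> Sy; have h1 := infle _ _ (Strans _ _ _ (xS n) Sy); have h2 := xlt n.
  have h3 : f y + e * `|y - x n.+1| <= f (x n.+1) := Sy.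
  move: h1 h2 h3; set a := f (x n.+1); set b := inf _; set c := harmonic n.
  lra.
have xcvg : cvg (x @ \oo).
  apply/cauchy_cvgP/cauchy_exP => eps eps0.
  have [N hN] := @harm_ex R _ (mulr_gt0 e0 eps0).
  exists (x N.+1).
  suff : \forall k \near \oo, ball (x N.+1) eps (x k) by [].
  apply: filterS (nbhs_infty_ge N.+1) => k hk.
  rewrite -ball_normE /= distrC.
  have := key N (x k) (xmono _ _ hk).
  move=> h2; rewrite -(ltr_pM2l e0); exact: lt_trans h2 (hN N (leqnn N)).
set xb := lim (x @ \oo).
have xcvg' : x @ \oo --> xb := xcvg.
have xbS n : S (x n) xb.
  have cvgg : (fun k => f (x k) + e * `|x k - x n|) @ \oo --> f xb + e * `|xb - x n|.
    apply: cvgD; first exact: (continuous_cvg _ (fc xb) xcvg').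
    apply: cvgM; first exact: cvg_cst.
    apply: cvg_norm; apply: cvgB; [exact: xcvg'|exact: cvg_cst].
  suff : [set t | t <= f (x n)] (f xb + e * `|xb - x n|) by [].
  apply: (closed_cvg _ (@closed_le R (f (x n))) _ _ cvgg).
  apply: filterS (nbhs_infty_ge n) => k hk; exact: xmono.
have key2 n y : S xb y -> e * `|y - xb| < harmonic n.
  move=> Sy.
  have h1 := infle _ _ (Strans _ _ _ (xS n) (Strans _ _ _ (xbS n.+1) Sy)).
  have h2 := xlt n.
  have h3 : f y + e * `|y - xb| <= f xb := Sy.
  have h4 : f xb + e * `|xb - x n.+1| <= f (x n.+1) := xbS n.+1.
  have h5 : 0 <= e * `|xb - x n.+1| by rewrite mulr_ge0 // ltW.
  move: h1 h2 h3 h4 h5; set a := f (x n.+1); set b := inf _; set c := harmonic n.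
  lra.
have Sxb y : S xb y -> y = xb.
  move=> Sy; apply/eqP; rewrite -subr_eq0 -normr_eq0.
  have := normr_ge0 (y - xb); rewrite le0r => /orP[//|hp].
  have [N hN] := @harm_ex R _ (mulr_gt0 e0 hp).
  have := hN N (leqnn N); have := key2 N y Sy.
  move=> q1 q2; suff : False by []; lra.
exists xb; split; first exact: (xbS 0%N).
move=> y; rewrite leNgt; apply/negP => hlt.
have Sy : S xb y := ltW hlt.
by move: hlt; rewrite (Sxb _ Sy) subrr normr0 mulr0 addr0 ltxx.
Qed.

Theorem theorem2 (R : realType) (X Y : completeNormedModType R)
  (F : X -> Y) (DF : X -> {linear X -> Y})
  (Fcont : continuous F)
  (Fgat : forall x : X, is_gateaux_derivative F x (DF x))
  (F0 : F 0 = 0)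
  (r m : R) (r_gt0 : 0 < r) (m_gt0 : 0 < m)
  (hL : forall x : X, `|x| <= r ->
     exists L : {linear Y -> X},
       continuous L /\ (forall v : Y, DF x (L v) = v) /\
       (forall v : Y, `|L v| <= m * `|v|)) :
  forall (ybar : Y), `|ybar| < r / m ->
  forall mu : R, m < mu ->
  exists xbar : X, `|xbar| < r /\ `|xbar| <= mu * `|ybar| /\ F xbar = ybar.
Proof.
move=> ybar hy mu hmu.
have mu0 : 0 < mu by apply: lt_trans hmu.
pose f x := `|F x - ybar|.
have fc : continuous f.
  move=> x; apply: cvg_norm; apply: cvgB; [exact: Fcont | exact: cvg_cst].
have hmu' : mu^-1 < m^-1 by rewrite ltf_pV2 // posrE.
have hyr : `|ybar| / r < m^-1.
  by rewrite ltr_pdivrMr // mulrC.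
set M := Num.max (mu^-1) (`|ybar| / r).
have hM1 : mu^-1 <= M by rewrite le_max lexx.
have hM2 : `|ybar| / r <= M by rewrite le_max lexx orbT.
have hM3 : M < m^-1 by rewrite gt_max hmu' hyr.
pose e := (M + m^-1) / 2.
have he1 : M < e by rewrite /e; lra.
have he2 : e < m^-1 by rewrite /e; lra.
have mui0 : 0 < mu^-1 by rewrite invr_gt0.
have e0 : 0 < e by lra.
have [xb [h1 h2]] := @ekeland R X f fc (fun x => normr_ge0 _) e e0 0.
have f0 : f 0 = `|ybar| by rewrite /f F0 sub0r normrN.
rewrite f0 subr0 in h1.
have fxb0 := normr_ge0 (F xb - ybar).
have hex : e * `|xb| <= `|ybar| by move: h1; rewrite /f; lra.
have hb1 : `|xb| <= mu * `|ybar|.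
  have : mu^-1 * `|xb| <= `|ybar|.
    apply: (le_trans _ hex); apply: ler_wpM2r => //; lra.
  move=> h; have := ler_wpM2l (ltW mu0) h; rewrite mulrA mulfV ?mul1r //; exact: lt0r_neq0.
have hb2 : `|xb| < r.
  have : `|ybar| < e * r by rewrite -ltr_pdivrMr //; lra.
  move=> h; have : e * `|xb| < e * r by lra.
  by rewrite ltr_pM2l.
exists xb; split => //; split => //.
apply/eqP; rewrite -subr_eq0; apply/negP => /negP vn0.
set v := F xb - ybar in vn0 h2 fxb0.
have v0 : 0 < `|v| by rewrite normr_gt0.
have [L [_ [hinv hnorm]]] := hL xb (ltW hb2).
set u := L (- v).
have hu : `|u| <= m * `|v| by have := hnorm (- v); rewrite normrN.
have Du : DF xb u = - v by exact: hinv.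
have [_ hg] := Fgat xb.
have em1 : e * m < 1.
  by rewrite -ltr_pdivlMr // div1r.
pose d := (1 - e * m) * `|v|.
have d0 : 0 < d by rewrite mulr_gt0 // subr_gt0.
have := hg u; rewrite Du => /cvgrPdist_lt /(_ d d0) /nbhs_ballP [r0 /= r00 hr].
pose t := Num.min (r0 / 2) 1.
have t0 : 0 < t by rewrite lt_min ltr01 andbT divr_gt0.
have t1 : t <= 1 by rewrite ge_min lexx orbT.
have tr : t < r0.
  have : t <= r0 / 2 by rewrite ge_min lexx.
  lra.
have := hr t; rewrite -ball_normE /= sub0r normrN gtr0_norm // => /(_ tr).
move=> /(_ (lt0r_neq0 t0)).
set q := t^-1 *: (F (xb + t *: u) - F xb) => hq.
have eq1 : F (xb + t *: u) - ybar = (1 - t) *: v + t *: (q + v).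
  rewrite [t *: (q + v)]scalerDr /q scalerA mulfV ?lt0r_neq0 // scale1r scalerBl scale1r.
  by rewrite /v; apply: zh.
have H1 : f (xb + t *: u) <= (1 - t) * `|v| + t * `|q + v|.
  rewrite /f eq1 (le_trans (ler_normD _ _)) // !normrZ.
  by rewrite (ger0_norm (ltW t0)) ger0_norm // subr_ge0.
have H2 := h2 (xb + t *: u); rewrite addrAC subrr add0r in H2.
have H3 : e * `|t *: u| <= t * (e * m * `|v|).
  rewrite normrZ gtr0_norm // mulrCA; apply: ler_wpM2l; first exact: ltW.
  by rewrite -mulrA; apply: ler_wpM2l; [exact: ltW|].
have H4 : t * `|q + v| < t * ((1 - e * m) * `|v|).
  rewrite ltr_pM2l //; move: hq; rewrite distrC opprK //.
move: H1 H2 H3 H4; rewrite /f -/v.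
set A := `|q + v|; set B := `|v|; set fx := `|F _ - ybar|; set C := `|t *: u|.
nra.
Qed.
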